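(* Let $u$ be a finite game with player set $\mathcal V$ and strategy profile space $\mathcal X$, and let $x^*\in\mathcal X$ be a Nash equilibrium of $u$. Then the margin of robustness of $x^*$ is $$\mu_u(x^* )=\tfrac12\min_{i\in\mathcal V}\chi^u_i(x^* ).$$
   Context: A finite game consists of a finite nonempty player set $\mathcal V$, a finite nonempty action set $\mathcal A_i$ for each $i\in\mathcal V$, the strategy profile space $\mathcal X=\prod_{i\in\mathcal V}\mathcal A_i$, and utilities $u_i:\mathcal X\to\mathbb R$; the game is identified with $u=(u_i)_{i\in\mathcal V}$, and $\mathcal U\cong\mathbb R^{\mathcal V\times\mathcal X}$ is the space of all such games. Norms: $\|u_i\|_\infty=\max_{x\in\mathcal X}|u_i(x)|$, $\|u\|_\infty=\max_{i\in\mathcal V}\|u_i\|_\infty$. Profiles $x,y$ are $i$-comparable, $x\sim_i y$, if they coincide except possibly in entry $i$. Define $\chi^u_i(x)=\min_{y\sim_i x,\,y\neq x}\{u_i(x)-u_i(y)\}$. A (pure strategy) Nash equilibrium is a profile $x^*$ with $\chi^u_i(x^* )\ge0$ for all $i$. The margin of robustness $\mu_u(x^* )$ of a Nash equilibrium $x^*$ of $u$ is the infimum of $\|\delta\|_\infty$ over all perturbations $\delta\in\mathcal U$ such that $x^*$ is not a Nash equilibrium of the perturbed game $u+\delta$. *)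

(* Defs.v *)
From HB Require Import structures.
From mathcomp Require Import all_boot all_order all_algebra.
From mathcomp Require Import all_classical all_reals ereal.
Set Implicit Arguments. Unset Strict Implicit. Unset Printing Implicit Defensive.
Import Order.TTheory GRing.Theory Num.Theory.
Local Open Scope ring_scope.
Local Open Scope classical_set_scope.

Section Game.
Variables (R : realType) (V : finType) (A : V -> finType).

Definition profile := {dffun forall i : V, A i}.

Definition game := V -> profile -> R.

Definition game_add (u d : game) : game := fun i x => u i x + d i x.

(* sup norm ||d||_oo = max_i max_x |d_i(x)| (sets nonempty, all terms >= 0) *)
Definition game_norm (d : game) : R :=
  \big[Num.max/0]_(i : V) \big[Num.max/0]_(x : profile) `|d i x|.

Definition icomparable (i : V) (x y : profile) : bool :=
  [forall j : V, (j != i) ==> (x j == y j)].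

Definition chi (u : game) (i : V) (x : profile) : \bar R :=
  \big[Order.min/+oo%E]_(y : profile | icomparable i x y && (y != x))
     ((u i x - u i y)%:E).

Definition is_nash (u : game) (x : profile) : Prop :=
  forall i : V, (0 <= chi u i x)%E.

(* margin of robustness: infimum of ||d|| over perturbations d
   such that x is not a Nash equilibrium of u + d (inf of empty set = +oo) *)
Definition margin (u : game) (x : profile) : \bar R :=
  ereal_inf [set (game_norm d)%:E | d in [set d : game | ~ is_nash (game_add u d) x]].

End Game.

(* Main.v *)
Require Import Defs.
From HB Require Import structures.
From mathcomp Require Import all_boot all_order all_algebra.
From mathcomp Require Import all_classical all_reals ereal.
From mathcomp Require Import lra.
Import Order.TTheory GRing.Theory Num.Theory.
Local Open Scope ring_scope.

Section Aux.
Variables (R : realType) (V : finType) (A : V -> finType).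

Lemma norm_ge (d : game R A) i x : `|d i x| <= game_norm d.
Proof.
rewrite /game_norm.
apply: le_trans (le_bigmax _ _ i).
exact: (le_bigmax _ (fun x => `|d i x|) x).
Qed.

Lemma norm_le (d : game R A) c : 0 <= c -> (forall i x, `|d i x| <= c) ->
  game_norm d <= c.
Proof.
move=> c0 H; rewrite /game_norm.
apply: bigmax_le => // i _; apply: bigmax_le => // x _; exact: H.
Qed.

Lemma chi_le (u : game R A) i x y : icomparable i x y -> y != x ->
  (chi u i x <= (u i x - u i y)%:E)%E.
Proof. by move=> h1 h2; apply: bigmin_le_cond; rewrite h1 h2. Qed.

End Aux.

Theorem proposition1 (R : realType) (V : finType) (A : V -> finType)
  (hV : (0 < #|V|)%N) (hA : forall i : V, (0 < #|A i|)%N)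
  (u : game R A) (xs : profile A) (hx : is_nash u xs) :
  margin u xs = ((2%:R)^-1%:E * \big[Order.min/+oo%E]_(i : V) chi u i xs)%E.
Proof.
set M := (\big[Order.min/+oo%E]_(i : V) chi u i xs).
have M0 : (0 <= M)%E by apply: le_bigmin => // i _; exact: hx.
apply/eqP; rewrite eq_le; apply/andP; split.
-
  case EM: M M0 => [r| |] // r0; last by rewrite mulry gtr0_sg ?invr_gt0 ?ltr0n // mul1e leey.
  have [i0 _] : exists i : V, true.
    by case/card_gt0P: hV => i _; exists i.
  have [i _ Ei] := @eq_bigmin _ _ _ +oo%E i0 (fun _ => true)
     (fun i => chi u i xs) isT (fun _ _ => leey _).
  rewrite -/M EM in Ei.
  have [y /andP [cy ny] Ey] : exists2 y, icomparable i xs y && (y != xs) &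
      chi u i xs = ((u i xs - u i y)%:E)%E.
    case: (pselect (exists y, icomparable i xs y && (y != xs))) => [[y Py]|N].
      have [y1 Py1 E1] := @eq_bigmin _ _ _ +oo%E y
          (fun y => icomparable i xs y && (y != xs))
          (fun y => ((u i xs - u i y)%:E)%E) Py (fun _ _ => leey _).
      by exists y1.
    exfalso; move: Ei; rewrite /chi big_pred0 // => z.
    by apply/negP => Pz; apply: N; exists z.
  rewrite -Ei in Ey; case: Ey => Ey.
  rewrite lee_fin in r0.
  apply/lee_addgt0Pr => e e0.
  set c := 2^-1 * r + e.
  have c0 : 0 <= c by rewrite /c; lra.
  pose d : game R A := fun j z => if j == i then
      (if z == y then c else if z == xs then - c else 0) else 0.
  apply: ge_ereal_inf; exists (game_norm d)%:E.
    exists d => //= hn.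
    have := hn i; apply/negP; rewrite -ltNge.
    apply: (le_lt_trans (@chi_le R V A (game_add u d) _ _ _ cy ny)).
    rewrite /game_add /d eqxx [xs == y]eq_sym (negbTE ny) !eqxx lte_fin.
    rewrite /c; lra.
  rewrite -EFinM -EFinD lee_fin; apply: norm_le => // j z.
  rewrite /d; case: (j == i); last by rewrite normr0.
  case: (z == y); first by rewrite ger0_norm.
  case: (z == xs); first by rewrite normrN ger0_norm.
  by rewrite normr0.
-
  apply: le_ereal_inf_tmp => _ [d /= hd <-].
  have [i hi] : exists i, ~ (0 <= chi (game_add u d) i xs)%E.
    apply: (contra_notP _ hd) => H i; apply: (contra_notP _ H) => h; by exists i.
  have [y /andP [cy ny] hy] : exists2 y, icomparable i xs y && (y != xs) &
      ~ (0 <= ((game_add u d i xs - game_add u d i y)%:E))%E.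
    apply: (contra_notP _ hi) => H; apply: le_bigmin => // z Pz.
    apply: (contra_notP _ H) => h; by exists z.
  have hMi : (M <= chi u i xs)%E by exact: bigmin_le.
  have := le_trans hMi (@chi_le R V A u _ _ _ cy ny).
  case EM: M M0 => [r| |] //; rewrite !lee_fin => r0 hr.
  move: hy; rewrite lee_fin /game_add => hy.
  have n1 := @norm_ge R V A d i xs; have n2 := @norm_ge R V A d i y.
  move/negP: hy; rewrite -ltNge => hy.
  have a1 := ler_norm (d i y).
  have a2 : - d i xs <= `|d i xs| by rewrite -normrN ler_norm.
  lra.
Qed.
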